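(* Let $k\ge1$ be an integer, assume condition $(\ast)$, and let $\alpha_k=\frac{2k+1}{kb}$. Define $$J(t)=\int_{[0,b]^k}\prod_{i=1}^k g(x_i)\,dx_1\cdots dx_k\int_{\alpha_k\log t\le s_1\le s_2\le\cdots\le s_k\le t}V_0u_1\cdots u_k\,e^{\lambda_0t}\prod_{j=1}^k e^{x_j(t-s_j)}\,ds_1\cdots ds_k,$$ the contribution to $EZ_k(t)$ from first mutation times $s_1\ge\alpha_k\log t$. Then $J(t)=o\!\left(t^{-2k}e^{(\lambda_0+kb)t}\right)$ as $t\to\infty$.
   Context: Here $\lambda_0>0$, $V_0>0$, $u_1,\dots,u_k>0$ are constants, and $g$ is a probability density on $[0,\infty)$. $EZ_k(t)$ (the mean number of type-$k$ cells in the model where $Z_0(t)=V_0e^{\lambda_0t}$ and type-$(j+1)$ cells arise from type-$j$ cells at rate $u_{j+1}$ with birth rate increased by an independent increment of density $g$) equals the same integral with the $s$-region replaced by $0\le s_1\le\cdots\le s_k\le t$. Condition $(\ast)$: for some $b>0$, $g$ vanishes outside $[0,b]$, $g$ is continuous at $b$, $g(b)>0$, and $g\le G$ on $[0,b]$ for some constant $G<\infty$. $f(t)=o(h(t))$ means $f(t)/h(t)\to0$. *)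

(* Defs.v *)
From HB Require Import structures.
From mathcomp Require Import all_boot all_order all_algebra.
From mathcomp Require Import all_classical all_reals all_analysis.
Set Implicit Arguments. Unset Strict Implicit. Unset Printing Implicit Defensive.
Import Order.TTheory GRing.Theory Num.Theory.
Import numFieldNormedType.Exports.
Local Open Scope classical_set_scope.
Local Open Scope ring_scope.

Fixpoint box_int {R : realType} (n : nat) (lo hi : R) (F : seq R -> \bar R) : \bar R :=
  match n with
  | 0 => F [::]
  | n'.+1 => (\int[@lebesgue_measure R]_(x in `[lo, hi]) box_int n' lo hi (fun l => F (x :: l)))%E
  end.

Fixpoint simplex_int {R : realType} (n : nat) (lo hi : R) (F : seq R -> \bar R) : \bar R :=
  match n with
  | 0 => F [::]
  | n'.+1 => (\int[@lebesgue_measure R]_(s in `[lo, hi])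
                 simplex_int n' s hi (fun l => F (s :: l)))%E
  end.

Definition alpha {R : realType} (k : nat) (b : R) : R := (2 * k%:R + 1) / (k%:R * b).

(* J(t): x-vector xs = (x_1..x_k) (index j-1 in the list), s-vector ss = (s_1..s_k);
   u_i = u i for i = 1..k. *)
Definition Jint {R : realType} (k : nat) (b lambda0 V0 : R) (u : nat -> R) (g : R -> R)
  (t : R) : \bar R :=
  box_int k 0 b (fun xs =>
    ((\prod_(i < k) g (nth 0 xs i))%:E *
     simplex_int k (alpha k b * ln t) t (fun ss =>
       (V0 * (\prod_(1 <= i < k.+1) u i) * expR (lambda0 * t) *
        \prod_(j < k) expR (nth 0 xs j * (t - nth 0 ss j)))%:E))%E).

(* Main.v *)
Require Import Defs.
From HB Require Import structures.
From mathcomp Require Import all_boot all_order all_algebra.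
From mathcomp Require Import all_classical all_reals all_analysis.
From mathcomp Require Import measurable_realfun ring lra.
Import Order.TTheory GRing.Theory Num.Theory.
Import numFieldNormedType.Exports.
Local Open Scope classical_set_scope.
Local Open Scope ring_scope.

Section SA.
Local Open Scope ereal_scope.
Context {R : realType}.
Local Notation mu := (@lebesgue_measure R).

Lemma le_int_nm (D : set R) (f h : R -> \bar R) :
  (forall x, D x -> 0 <= f x) -> (forall x, D x -> f x <= h x) ->
  \int[mu]_(x in D) f x <= \int[mu]_(x in D) h x.
Proof.
move=> f0 fh.
have h0 x : D x -> 0 <= h x by move=> Dx; exact: le_trans (f0 _ Dx) (fh _ Dx).
rewrite !ge0_integralE//; apply: le_ereal_sup => _ [s /= Hs <-].
exists s => //= x; apply: le_trans (Hs x) _.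
by rewrite /patch; case: ifP => // /set_mem /fh.
Qed.

Lemma le_int_dom (D1 D2 : set R) (f : R -> \bar R) :
  D1 `<=` D2 -> (forall x, D2 x -> 0 <= f x) ->
  \int[mu]_(x in D1) f x <= \int[mu]_(x in D2) f x.
Proof.
move=> D12 f0.
rewrite !ge0_integralE//; last by move=> x /D12 /f0.
apply: le_ereal_sup => _ [s /= Hs <-].
exists s => //= x; apply: le_trans (Hs x) _.
rewrite /patch; case: ifP => [/set_mem /D12 D2x|_]; first by rewrite mem_set.
by case: ifP => // /set_mem /f0.
Qed.

Lemma simplex_ge0 n (lo hi : R) F : (forall l, 0 <= F l) -> 0 <= simplex_int n lo hi F.
Proof.
elim: n lo F => [|n IH] lo F F0 /=; first exact: F0.
by apply: integral_ge0 => s _; apply: IH.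
Qed.

Lemma box_ge0 n (lo hi : R) F : (forall l, 0 <= F l) -> 0 <= box_int n lo hi F.
Proof.
elim: n F => [|n IH] F F0 /=; first exact: F0.
by apply: integral_ge0 => s _; apply: IH.
Qed.

Lemma box_mono n (lo hi : R) F F' : (forall l, 0 <= F l) -> (forall l, F l <= F' l) ->
  box_int n lo hi F <= box_int n lo hi F'.
Proof.
elim: n F F' => [|n IH] F F' F0 FF' /=; first exact: FF'.
apply: le_int_nm => s _; first exact: box_ge0.
exact: IH.
Qed.

Lemma simplex_bound n (lo hi : R) (f : nat -> R -> R) (M : nat -> R) (c lo' : R) :
  (0 <= c)%R -> (forall j s, 0 <= f j s)%R -> (forall j, measurable_fun setT (f j)) ->
  (forall j, 0 <= M j)%R ->
  (forall j, (j < n)%N -> \int[mu]_(s in `[lo, hi]) (f j s)%:E <= (M j)%:E) ->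
  (lo <= lo')%R ->
  simplex_int n lo' hi (fun ss => (c * \prod_(j < n) f j (nth 0%R ss j))%:E)
   <= (c * \prod_(j < n) M j)%:E.
Proof.
elim: n f M c lo' => [|n IH] f M c lo' c0 f0 mf M0 fM lolo' /=.
  by rewrite !big_ord0.
have PM0 : (0 <= c * \prod_(j < n) M j.+1)%R.
  by apply: mulr_ge0 => //; apply: prodr_ge0 => j _.
apply: (@le_trans _ _ (\int[mu]_(s in `[lo', hi]) ((c * \prod_(j < n) M j.+1)%:E * (f 0%N s)%:E))).
  apply: le_int_nm => s.
    move=> _; apply: simplex_ge0 => l; rewrite lee_fin.
    by apply: mulr_ge0 => //; apply: prodr_ge0 => j _.
  rewrite /= in_itv /= => /andP[ls _].
  have -> : (fun l => (c * \prod_(j < n.+1) f j (nth 0%R (s :: l) j))%:E) =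
     (fun l => ((c * f 0%N s) * \prod_(j < n) f j.+1 (nth 0%R l j))%:E).
    by apply: funext => l; rewrite big_ord_recl /= mulrA.
  apply: le_trans (IH (fun j => f j.+1) (fun j => M j.+1) (c * f 0%N s)%R s _ _ _ _ _ _) _ => //.
  - exact: mulr_ge0.
  - by move=> j jn; apply: fM.
  - exact: le_trans ls.
  - by rewrite -EFinM lee_fin mulrAC.
apply: (@le_trans _ _ (\int[mu]_(s in `[lo, hi]) ((c * \prod_(j < n) M j.+1)%:E * (f 0%N s)%:E))).
  apply: le_int_dom.
    by apply: subset_itvr; rewrite bnd_simp.
  by move=> x _; apply: mule_ge0; rewrite lee_fin.
rewrite ge0_integralZl_EFin //.
- apply: (@le_trans _ _ ((c * \prod_(j < n) M j.+1)%:E * (M 0%N)%:E)).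
    by apply: lee_wpmul2l; [rewrite lee_fin|exact: fM].
  by rewrite -EFinM lee_fin big_ord_recl mulrC mulrCA.
- by move=> x _; rewrite lee_fin.
- by apply/measurable_EFinP; apply: measurable_funS (mf 0%N).
Qed.

Lemma box_bound n (lo hi : R) (f : nat -> R -> R) (M : nat -> R) (c : R) :
  (0 <= c)%R -> (forall j s, 0 <= f j s)%R -> (forall j, measurable_fun setT (f j)) ->
  (forall j, 0 <= M j)%R ->
  (forall j, (j < n)%N -> \int[mu]_(s in `[lo, hi]) (f j s)%:E <= (M j)%:E) ->
  box_int n lo hi (fun ss => (c * \prod_(j < n) f j (nth 0%R ss j))%:E)
   <= (c * \prod_(j < n) M j)%:E.
Proof.
elim: n f M c => [|n IH] f M c c0 f0 mf M0 fM /=.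
  by rewrite !big_ord0.
have PM0 : (0 <= c * \prod_(j < n) M j.+1)%R.
  by apply: mulr_ge0 => //; apply: prodr_ge0 => j _.
apply: (@le_trans _ _ (\int[mu]_(s in `[lo, hi]) ((c * \prod_(j < n) M j.+1)%:E * (f 0%N s)%:E))).
  apply: le_int_nm => s.
    move=> _; apply: box_ge0 => l; rewrite lee_fin.
    by apply: mulr_ge0 => //; apply: prodr_ge0 => j _.
  move=> _.
  have -> : (fun l => (c * \prod_(j < n.+1) f j (nth 0%R (s :: l) j))%:E) =
     (fun l => ((c * f 0%N s) * \prod_(j < n) f j.+1 (nth 0%R l j))%:E).
    by apply: funext => l; rewrite big_ord_recl /= mulrA.
  apply: le_trans (IH (fun j => f j.+1) (fun j => M j.+1) (c * f 0%N s)%R _ _ _ _ _) _ => //.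
  - exact: mulr_ge0.
  - by move=> j jn; apply: fM.
  - by rewrite -EFinM lee_fin mulrAC.
rewrite ge0_integralZl_EFin //.
- apply: (@le_trans _ _ ((c * \prod_(j < n) M j.+1)%:E * (M 0%N)%:E)).
    by apply: lee_wpmul2l; [rewrite lee_fin|exact: fM].
  by rewrite -EFinM lee_fin big_ord_recl mulrC mulrCA.
- by move=> x _; rewrite lee_fin.
- by apply/measurable_EFinP; apply: measurable_funS (mf 0%N).
Qed.
End SA.

Section SB.
Context {R : realType}.
Local Notation mu := (@lebesgue_measure R).

Lemma dlin (c d y : R) : is_derive y (1:R) (fun z => c * z + d) c.
Proof.
have := is_deriveD (is_deriveZ c (is_derive_id y (1:R))) (is_derive_cst d y 1).
by rewrite /GRing.scale /= mulr1 addr0.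
Qed.

Lemma dF (c d y : R) : c != 0 ->
  is_derive y (1:R) (fun z => expR (c * z + d) / c) (expR (c * y + d)).
Proof.
move=> c0.
have h2 : is_derive y (1:R) (expR \o (fun z => c * z + d)) (expR (c * y + d) * c).
  exact: is_derive1_comp (dlin c d y).
have h3 := is_deriveZ (c^-1) h2.
rewrite /GRing.scale /= in h3.
have -> : (fun z => expR (c * z + d) / c) = c^-1 *: (expR \o (fun z => c * z + d)).
  by apply: funext => z; rewrite /GRing.scale /= mulrC.
by apply: trigger_derive h3 _; rewrite mulrCA mulVf ?mulr1.
Qed.

Lemma cont_exp_lin (c d : R) : continuous (fun z => expR (c * z + d)).
Proof.
move=> y.
have h2 : is_derive y (1:R) (expR \o (fun z => c * z + d)) (expR (c * y + d) * c).
  exact: is_derive1_comp (dlin c d y).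
by apply/differentiable_continuous/derivable1_diffP; case: h2.
Qed.

Lemma int_exp (c d p q : R) : c != 0 -> p < q ->
  (\int[mu]_(y in `[p, q]) (expR (c * y + d))%:E =
   ((expR (c * q + d) - expR (c * p + d)) / c)%:E)%E.
Proof.
move=> c0 pq.
have dd y := dF c d y c0.
have cF : continuous (fun z => expR (c * z + d) / c).
  by move=> y; apply/differentiable_continuous/derivable1_diffP; case: (dd y).
rewrite (@continuous_FTC2 _ _ (fun z => expR (c * z + d) / c)) //.
- by rewrite -EFinB mulrBl.
- exact/continuous_subspaceT/cont_exp_lin.
- split.
  + by move=> y _; case: (dd y).
  + exact/cvg_at_right_filter/cF.
  + exact/cvg_at_left_filter/cF.
- by move=> y _; rewrite derive1E; have [_ ->] := dd y.
Qed.

Lemma int_cst_itv (K p q : R) : p <= q ->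
  (\int[mu]_(y in `[p, q]) K%:E = (K * (q - p))%:E)%E.
Proof.
move=> pq.
rewrite integral_cst //= lebesgue_measure_itv /= lte_fin.
have [pq'|qp] := ltP p q; first by rewrite -EFinB -EFinM.
have -> : q = p by apply/eqP; rewrite eq_le pq qp.
by rewrite subrr mulr0 mule0.
Qed.

Definition psi (b T y : R) := T * expR (b * T / 2) + 2 / b * expR (T * y).

Lemma psi_ge0 b T y : 0 < b -> 0 <= T -> 0 <= psi b T y.
Proof.
move=> b0 T0; rewrite /psi; apply: addr_ge0; apply: mulr_ge0 => //;
  try exact: expR_ge0.
by apply: divr_ge0 => //; apply: ltW.
Qed.

Lemma s_bound (b x a t : R) : 0 < b -> 0 <= x <= b -> a < t ->
  (\int[mu]_(s in `[a, t]) (expR (x * (t - s)))%:E <= (psi b (t - a) x)%:E)%E.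
Proof.
move=> b0 /andP[x0 xb] at_.
have T0 : 0 < t - a by rewrite subr_gt0.
have e0 (y : R) : 0 <= expR y by exact: expR_ge0.
have [xb2|xb2] := lerP x (b / 2).
  apply: (@le_trans _ _ (\int[mu]_(s in `[a, t]) (expR (b * (t - a) / 2))%:E)%E).
    apply: le_int_nm => s; first by move=> _; rewrite lee_fin.
    rewrite /= in_itv /= => /andP[as_ st]; rewrite lee_fin ler_expR.
    have : 0 <= t - s <= t - a by apply/andP; split; lra.
    move=> /andP[h1 h2]; nra.
  rewrite (int_cst_itv _ _ _ (ltW at_)) lee_fin /psi mulrC.
  by rewrite lerDl; apply: mulr_ge0 => //; apply: divr_ge0 => //; apply: ltW.
have xn0 : - x != 0 by rewrite oppr_eq0 gt_eqF //; lra.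
have -> : (fun s => (expR (x * (t - s)))%:E) = (fun s => (expR ((- x) * s + x * t))%:E).
  by apply: funext => s; congr (_%:E); congr expR; ring.
rewrite int_exp //.
have -> : - x * t + x * t = 0 by ring.
rewrite expR0 lee_fin /psi.
have xpos : 0 < x by lra.
have -> : (1 - expR (- x * a + x * t)) / - x = (expR (x * (t - a)) - 1) / x.
  have -> : - x * a + x * t = x * (t - a) by ring.
  by field; rewrite gt_eqF.
rewrite [(t - a) * x]mulrC.
apply: (@le_trans _ _ (2 / b * expR (x * (t - a)))); last first.
  by rewrite lerDr; apply: mulr_ge0 => //; exact: ltW.
rewrite ler_pdivrMr // mulrAC.
have E1 : 1 <= expR (x * (t - a)) by rewrite -expR0 ler_expR; apply: mulr_ge0; lra.
have hx : 1 <= 2 / b * x by rewrite mulrAC ler_pdivlMr // mul1r; lra.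
nra.
Qed.

Lemma cont_exp (T : R) : continuous (fun y => expR (T * y)).
Proof.
have -> : (fun y => expR (T * y)) = (fun y => expR (T * y + 0)).
  by apply: funext => y; rewrite addr0.
exact: cont_exp_lin.
Qed.

Lemma cont_psi b T : continuous (psi b T).
Proof.
move=> y; rewrite /psi; apply: cvgD; first exact: cvg_cst.
by apply: cvgM; [exact: cvg_cst|exact: cont_exp].
Qed.

Lemma x_bound (b T G : R) (g : R -> R) : 0 < b -> 0 < T -> (forall x, 0 <= g x) ->
  measurable_fun setT g -> (forall x : R, x \in `[0, b] -> g x <= G) ->
  (\int[mu]_(y in `[0%R, b]) (g y * psi b T y)%:E <=
   (G * (b * T * expR (b * T / 2) + 2 * expR (b * T) / (b * T)))%:E)%E.
Proof.
move=> b0 T0 g0 mg gG.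
have G0 : 0 <= G.
  by apply: le_trans (g0 0) (gG 0 _); rewrite in_itv /= lexx ltW.
have ps0 y : 0 <= psi b T y by apply: psi_ge0 => //; exact: ltW.
apply: (@le_trans _ _ (\int[mu]_(y in `[0%R, b]) (G%:E * (psi b T y)%:E))%E).
  apply: le_int_nm => y; first by move=> _; rewrite lee_fin; apply: mulr_ge0.
  move=> Dy; have gyG : g y <= G by apply: gG; exact: Dy.
  rewrite -EFinM lee_fin.
  exact: ler_wpM2r.
rewrite ge0_integralZl_EFin //; last 2 first.
- by move=> y _; rewrite lee_fin.
- apply/measurable_EFinP; apply: measurable_funS (continuous_measurable_fun (cont_psi b T)) => //.
have -> : (fun y => (psi b T y)%:E) =
    (fun y => (T * expR (b * T / 2))%:E + (2 / b)%:E * (expR (T * y + 0))%:E)%E.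
  by apply: funext => y; rewrite /psi addr0 -EFinM -EFinD.
have e0 (y : R) : 0 <= expR y by exact: expR_ge0.
rewrite ge0_integralD //; last 3 first.
- by move=> y _; rewrite lee_fin; apply: mulr_ge0; [exact: ltW|exact: e0].
- by move=> y _; rewrite -EFinM lee_fin; apply: mulr_ge0 => //; apply: divr_ge0 => //; exact: ltW.
- apply: emeasurable_funM; first exact: measurable_cst.
  apply/measurable_EFinP; apply: measurable_funS (continuous_measurable_fun (cont_exp_lin T 0)) => //.
rewrite ge0_integralZl_EFin //; try solve [by move=> y _; rewrite lee_fin
  | by apply/measurable_EFinP; apply: measurable_funS (continuous_measurable_fun (cont_exp_lin T 0))
  | by apply: divr_ge0 => //; exact: ltW].
rewrite int_cst_itv; last exact: ltW.
rewrite int_exp //; last exact: lt0r_neq0.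
rewrite -!EFinM lee_fin.
apply: ler_wpM2l => //.
rewrite !addr0 mulr0 expR0 subr0 [T * b]mulrC.
apply: lerD; first by rewrite mulrC mulrA.
rewrite -subr_ge0.
have -> : 2 * expR (b * T) / (b * T) - 2 / b * ((expR (b * T) - 1) / T) = 2 / (b * T).
  by field; apply/andP; split; apply: lt0r_neq0.
by apply: divr_ge0 => //; apply: mulr_ge0; apply: ltW.
Qed.

Lemma J_bound (k : nat) (lambda0 V0 b G : R) (u : nat -> R) (g : R -> R) (t : R) :
  0 < V0 -> (forall i, (1 <= i <= k)%N -> 0 < u i) ->
  (forall x, 0 <= g x) -> measurable_fun setT g -> 0 < b ->
  (forall x, x \notin `[0, b] -> g x = 0) ->
  (forall x, x \in `[0, b] -> g x <= G) ->
  alpha k b * ln t < t ->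
  (Jint k b lambda0 V0 u g t <=
   ((V0 * (\prod_(1 <= i < k.+1) u i) * expR (lambda0 * t)) *
    \prod_(j < k) (G * (b * (t - alpha k b * ln t) * expR (b * (t - alpha k b * ln t) / 2)
       + 2 * expR (b * (t - alpha k b * ln t)) / (b * (t - alpha k b * ln t)))))%:E)%E.
Proof.
move=> V00 u0 g0 mg b0 gout gG at_.
set a := alpha k b * ln t.
set T := t - a.
set c := V0 * (\prod_(1 <= i < k.+1) u i) * expR (lambda0 * t).
set Mb := G * _.
have T0 : 0 < T by rewrite /T subr_gt0.
have G0 : 0 <= G.
  by apply: le_trans (g0 0) (gG 0 _); rewrite in_itv /= lexx ltW.
have c0 : 0 <= c.
  apply: mulr_ge0; last exact: expR_ge0.
  apply: mulr_ge0; first exact: ltW.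
  rewrite big_nat_cond; apply: prodr_ge0 => i /andP[/andP[i1 ik] _].
  by apply: ltW; apply: u0; rewrite i1 -ltnS ik.
have Mb0 : 0 <= Mb.
  apply: mulr_ge0 => //; apply: addr_ge0.
    by apply: mulr_ge0; [apply: mulr_ge0; apply: ltW|exact: expR_ge0].
  apply: divr_ge0; first by apply: mulr_ge0 => //; exact: expR_ge0.
  by apply: mulr_ge0; apply: ltW.
have ps0 y : 0 <= psi b T y by apply: psi_ge0 => //; exact: ltW.
rewrite /Jint -/a.
apply: (@le_trans _ _ (box_int k 0 b (fun xs => (c * \prod_(j < k) ((fun _ y => g y * psi b T y) j (nth 0 xs j)))%:E))); last first.
  apply: (box_bound k 0 b (fun _ y => g y * psi b T y) (fun _ => Mb) c c0).
  - by move=> j s; apply: mulr_ge0.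
  - move=> j; apply: measurable_funM => //.
    exact: continuous_measurable_fun (cont_psi b T).
  - by move=> j.
  - by move=> j _; apply: x_bound.
apply: box_mono.
- move=> xs; apply: mule_ge0; first by rewrite lee_fin; apply: prodr_ge0.
  by apply: simplex_ge0 => l; rewrite lee_fin; apply: mulr_ge0 => //; apply: prodr_ge0 => j _; exact: expR_ge0.
- move=> xs.
  have RHS0 : (0 <= c * \prod_(j < k) (g (nth 0 xs j) * psi b T (nth 0 xs j)))%R.
    by apply: mulr_ge0 => //; apply: prodr_ge0 => j _; apply: mulr_ge0.
  case: (boolP [forall i : 'I_k, nth 0 xs i \in `[0, b]]) => [/forallP Hin|].
    have Hs := simplex_bound k a t (fun j s => expR (nth 0 xs j * (t - s)))
      (fun j => psi b T (nth 0 xs j)) c a c0 (fun j s => expR_ge0 _) _ (fun j => ps0 _) _ (lexx a).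
    apply: le_trans (lee_wpmul2l _ (Hs _ _)) _.
    + by rewrite lee_fin; apply: prodr_ge0.
    + move=> j; apply: continuous_measurable_fun.
      have -> : (fun s => expR (nth 0 xs j * (t - s))) =
         (fun s => expR ((- nth 0 xs j) * s + nth 0 xs j * t)).
        by apply: funext => s; congr expR; ring.
      exact: cont_exp_lin.
    + move=> j jk.
      have := Hin (Ordinal jk); rewrite in_itv /= => Hx.
      exact: s_bound.
    + by rewrite -EFinM lee_fin big_split /= mulrCA.
  move/forallPn => [i Hi].
  rewrite (bigD1 i) //= gout // mul0r mul0e lee_fin.
  exact: RHS0.
Qed.
End SB.

Section SC.
Context {R : realType}.

Lemma exp4 (x : R) : 0 <= x -> x ^+ 4 / 24 <= expR x.
Proof.
move=> x0; have := expR_ge1Dxn 3 x0.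
have -> : (3.+1)`!%:R = 24 :> R by [].
have : 0 <= x ^+ 4 / 24 by apply: divr_ge0 => //; apply: exprn_ge0.
lra.
Qed.

Lemma exp2 (x : R) : 0 <= x -> x ^+ 2 / 2 <= expR x.
Proof.
move=> x0; have := expR_ge1Dxn 1 x0.
have -> : (1.+1)`!%:R = 2 :> R by [].
have : 0 <= x ^+ 2 / 2 by apply: divr_ge0 => //; apply: exprn_ge0.
lra.
Qed.

Lemma ln_small (al t : R) : 0 < al -> 1 + 8 * al ^+ 2 <= t -> al * ln t <= t / 2.
Proof.
move=> a0 ht.
have t1 : 1 <= t by have := sqr_ge0 al; nra.
have t0 : 0 < t by lra.
have y0 : 0 <= ln t by exact: ln_ge0.
have := exp2 (ln t) y0; rewrite lnK; last by rewrite posrE.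
move=> hy.
have := sqr_ge0 (ln t - 4 * al).
nra.
Qed.

Lemma alpha_gt0 (k : nat) (b : R) : (1 <= k)%N -> 0 < b -> 0 < alpha k b.
Proof.
move=> k1 b0; rewrite /alpha; apply: divr_gt0.
  by apply: ltr_wpDl; [apply: mulr_ge0 => //|].
by apply: mulr_gt0 => //; rewrite ltr0n.
Qed.

Lemma balpha (k : nat) (b : R) : (1 <= k)%N -> 0 < b -> 2 <= b * alpha k b.
Proof.
move=> k1 b0; rewrite /alpha.
have k0 : (0 : R) < k%:R by rewrite ltr0n.
have -> : b * ((2 * k%:R + 1) / (k%:R * b)) = (2 * k%:R + 1) / k%:R.
  by field; apply/andP; split; apply: lt0r_neq0.
by rewrite ler_pdivlMr //; lra.
Qed.

Lemma Mb_bound (k : nat) (b G t : R) : (1 <= k)%N -> 0 < b -> 0 <= G ->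
  1 + 8 * (alpha k b) ^+ 2 <= t ->
  (G * (b * (t - alpha k b * ln t) * expR (b * (t - alpha k b * ln t) / 2)
       + 2 * expR (b * (t - alpha k b * ln t)) / (b * (t - alpha k b * ln t))))
   * t ^+ 2 / expR (b * t) <= G * (384 / b ^+ 3 + 4 / b) / t.
Proof.
move=> k1 b0 G0 ht.
have al0 := alpha_gt0 k b k1 b0.
have t1 : 1 <= t by have := sqr_ge0 (alpha k b); nra.
have t0 : 0 < t by lra.
have y0 : 0 <= ln t by exact: ln_ge0.
have asm := ln_small (alpha k b) t al0 ht.
set a := alpha k b * ln t in asm *.
have a0 : 0 <= a by apply: mulr_ge0 => //; exact: ltW.
set T := t - a.
have Tt : T <= t by rewrite /T; lra.
have Tt2 : t / 2 <= T by rewrite /T; lra.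
have T0 : 0 < T by lra.
set H := expR (b * t / 2).
set H' := expR (b * T / 2).
set E := expR (b * t).
set E' := expR (b * T).
have H0 : 0 < H by exact: expR_gt0.
have H'0 : 0 <= H' by exact: expR_ge0.
have E'0 : 0 <= E' by exact: expR_ge0.
have E0 : 0 < E by exact: expR_gt0.
have HH : E = H * H by rewrite /E /H -expRD; congr expR; field.
have H'H : H' <= H.
  rewrite /H' /H ler_expR; apply: ler_wpM2r; first by rewrite invr_ge0.
  by apply: ler_wpM2l => //; exact: ltW.
have h4 : (b * t) ^+ 4 <= 384 * H.
  have := exp4 (b * t / 2) (divr_ge0 (mulr_ge0 (ltW b0) (ltW t0)) (ler0n R 2)).
  rewrite -/H; have -> : (b * t / 2) ^+ 4 / 24 = (b * t) ^+ 4 / 384 by field.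
  by rewrite ler_pdivrMr //; lra.
have E'E : E' * t ^+ 2 <= E.
  have ba := balpha k b k1 b0.
  have -> : E' = expR (b * t) * expR (- (b * a)) by rewrite /E' -expRD /T; congr expR; ring.
  have e2 : expR (- (2%:R * ln t)) = (t ^+ 2)^-1.
    by rewrite expRN expRM_natl lnK // posrE.
  have h : expR (- (b * a)) <= (t ^+ 2)^-1.
    rewrite -e2 ler_expR lerN2 /a mulrA. by apply: ler_wpM2r.
  have t20 : 0 < t ^+ 2 by apply: exprn_gt0.
  rewrite -ler_pdivlMr //.
  by rewrite -/E; apply: ler_wpM2l; [exact: ltW|exact: h].
have t1b : b * T * H' <= 384 * E / (b ^+ 3 * t ^+ 3).
  rewrite ler_pdivlMr; last by apply: mulr_gt0; apply: exprn_gt0.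
  apply: (@le_trans _ _ (b * t * H * (b ^+ 3 * t ^+ 3))).
    apply: ler_wpM2r; first by apply: mulr_ge0; apply: exprn_ge0; apply: ltW.
    apply: ler_pM => //; first by apply: mulr_ge0; apply: ltW.
    by apply: ler_wpM2l => //; exact: ltW.
  have -> : b * t * H * (b ^+ 3 * t ^+ 3) = (b * t) ^+ 4 * H by ring.
  rewrite HH mulrA; apply: ler_wpM2r => //; exact: ltW.
have t2b : 2 * E' / (b * T) <= 4 * E / (b * t ^+ 3).
  rewrite ler_pdivrMr; last exact: mulr_gt0.
  rewrite mulrAC ler_pdivlMr; last by apply: mulr_gt0 => //; apply: exprn_gt0.
  have -> : 2 * E' * (b * t ^+ 3) = 2 * b * t * (E' * t ^+ 2) by ring.
  apply: (@le_trans _ _ (2 * b * t * E)).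
    apply: ler_wpM2l => //; apply: mulr_ge0; [apply: mulr_ge0|]; lra.
  have -> : 4 * E * (b * T) = (2 * b * E) * (2 * T) by ring.
  have -> : 2 * b * t * E = (2 * b * E) * t by ring.
  apply: ler_wpM2l; last lra.
  by apply: mulr_ge0; [apply: mulr_ge0; lra|exact: ltW].
have Mb : G * (b * T * H' + 2 * E' / (b * T)) <= G * (384 / b ^+ 3 + 4 / b) * E / t ^+ 3.
  apply: (@le_trans _ _ (G * (384 * E / (b ^+ 3 * t ^+ 3) + 4 * E / (b * t ^+ 3)))).
    by apply: ler_wpM2l => //; apply: lerD.
  rewrite le_eqVlt; apply/orP; left; apply/eqP; field.
  by apply/andP; split; apply: lt0r_neq0.
rewrite ler_pdivrMr //.
apply: le_trans (ler_wpM2r (exprn_ge0 2 (ltW t0)) Mb) _.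
rewrite le_eqVlt; apply/orP; left; apply/eqP; field.
by apply/andP; split; apply: lt0r_neq0.
Qed.
Lemma pow_le_self (k : nat) (r : R) : (1 <= k)%N -> 0 <= r -> r <= 1 -> r ^+ k <= r.
Proof.
case: k => // k _ r0 r1; rewrite exprS.
by apply: ler_piMr => //; apply: exprn_ile1.
Qed.
End SC.

Theorem lemma4 (R : realType) (k : nat) (lambda0 V0 b G : R) (u : nat -> R) (g : R -> R) :
  (1 <= k)%N ->
  0 < lambda0 -> 0 < V0 ->
  (forall i, (1 <= i <= k)%N -> 0 < u i) ->
  (* g is a probability density on [0, +oo) *)
  (forall x, 0 <= g x) ->
  measurable_fun setT g ->
  (\int[@lebesgue_measure R]_(x in `[0%R, +oo[) (g x)%:E)%E = 1%E ->
  (* condition (ast) *)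
  0 < b ->
  (forall x, x \notin `[0, b] -> g x = 0) ->
  g x @[x --> b^'-] --> g b ->
  0 < g b ->
  (forall x, x \in `[0, b] -> g x <= G) ->
  (* J(t) = o(t^{-2k} e^{(lambda0 + k b) t}) *)
  (fun t => Jint k b lambda0 V0 u g t *
            ((t ^+ (2 * k))%R / expR ((lambda0 + k%:R * b) * t))%:E)%E
    @ +oo --> 0%E.
Proof.
move=> k1 l0 V00 u0 g0 mg _ b0 gout _ gb0 gG.
have G0 : 0 < G by apply: lt_le_trans gb0 (gG b _); rewrite in_itv /= lexx ltW.
set c1 := V0 * \prod_(1 <= i < k.+1) u i.
have c10 : 0 < c1.
  apply: mulr_gt0 => //.
  rewrite big_nat_cond; apply: prodr_gt0 => i /andP[/andP[i1 ik] _].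
  by apply: u0; rewrite i1 -ltnS ik.
set K := G * (384 / b ^+ 3 + 4 / b).
have K0 : 0 < K.
  apply: mulr_gt0 => //; apply: addr_gt0; apply: divr_gt0 => //; exact: exprn_gt0.
set al := alpha k b.
set t0 := 1 + 8 * al ^+ 2 + K.
apply: (@squeeze_cvge _ _ _ _ (cst 0%E) _ (fun t => ((c1 * K) / t)%:E)).
- near=> t.
  have tt0 : t0 <= t by near: t; apply: nbhs_pinfty_ge; rewrite num_real.
  have ht : 1 + 8 * al ^+ 2 <= t by have := sqr_ge0 al; rewrite /t0 in tt0; lra.
  have tK : K <= t by have := sqr_ge0 al; rewrite /t0 in tt0; lra.
  have t0' : 0 < t by lra.
  have q0 : 0 <= t ^+ (2 * k) / expR ((lambda0 + k%:R * b) * t).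
    by apply: divr_ge0; [apply: exprn_ge0; lra|exact: expR_ge0].
  have J0 : (0 <= Jint k b lambda0 V0 u g t)%E.
    apply: box_ge0 => xs; apply: mule_ge0; first by rewrite lee_fin; apply: prodr_ge0.
    apply: simplex_ge0 => l; rewrite lee_fin; apply: mulr_ge0; last by apply: prodr_ge0 => j _; exact: expR_ge0.
    by apply: mulr_ge0; [exact: ltW c10|exact: expR_ge0].
  apply/andP; split; first by rewrite /cst; apply: mule_ge0 => //; rewrite lee_fin.
  have al0 : 0 < al by exact: alpha_gt0.
  have asm := ln_small al t al0 ht.
  have at_ : al * ln t < t by lra.
  have JB := J_bound k lambda0 V0 b G u g t V00 u0 g0 mg b0 gout gG at_.
  apply: le_trans (lee_wpmul2r _ JB) _; first by rewrite lee_fin.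
  rewrite -EFinM lee_fin prodr_const card_ord.
  set Mb := G * _.
  have MB := Mb_bound k b G t k1 b0 (ltW G0) ht.
  rewrite -/Mb -/K in MB.
  have Mb0 : 0 <= Mb.
    rewrite /Mb; apply: mulr_ge0; first exact: ltW.
    have T0 : 0 < t - alpha k b * ln t by rewrite -/al; lra.
    apply: addr_ge0.
      by apply: mulr_ge0; [apply: mulr_ge0; lra|exact: expR_ge0].
    apply: divr_ge0; first by apply: mulr_ge0 => //; exact: expR_ge0.
    by apply: mulr_ge0; lra.
  set r := Mb * t ^+ 2 / expR (b * t) in MB.
  have r0 : 0 <= r by apply: divr_ge0; [apply: mulr_ge0 => //; apply: exprn_ge0; lra|exact: expR_ge0].
  have Kt1 : K / t <= 1 by rewrite ler_pdivrMr // mul1r.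
  have -> : V0 * \prod_(1 <= i < k.+1) u i * expR (lambda0 * t) * Mb ^+ k *
      (t ^+ (2 * k) / expR ((lambda0 + k%:R * b) * t)) = c1 * r ^+ k.
    rewrite /r expr_div_n (exprMn k Mb) -exprM.
    have -> : (lambda0 + k%:R * b) * t = lambda0 * t + k%:R * (b * t) by ring.
    rewrite expRD expRM_natl /c1.
    field.
    by apply/andP; split; [apply: expf_neq0|]; apply: lt0r_neq0; exact: expR_gt0.
  rewrite -mulrA; apply: ler_wpM2l; first exact: ltW.
  have h1 := pow_le_self k r k1 r0 (le_trans MB Kt1).
  exact: (le_trans h1 MB).
- exact: cvg_cst.
- apply: cvg_EFin; first by near=> t.
  have hinv : (fun x : R => x^-1) @ +oo --> (0:R).
    have H0 : \forall x \near +oo, (0:R) < id x.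
      by apply: nbhs_pinfty_gt; rewrite num_real.
    by apply/(gtr0_cvgV0 H0); exact: cvg_id.
  have := cvgMl_tmp (a := c1 * K) hinv; rewrite mulr0.
  by move=> h; exact: h.
Unshelve. all: by end_near. Qed.
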